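(* Let $d\ge 2$ and let $\mathfrak{F}$ be an ordered field or a field that has more than two elements. Let $\mathcal{G}$ and $\mathcal{G}'$ be FFD coordinate geometries over $\mathfrak{F}$ (of dimension $d$). Then: (i) $\mathrm{Co}(\mathcal{G})\subseteq\mathrm{Co}(\mathcal{G}')$ if and only if $\mathrm{Aut}(\mathcal{G})\supseteq\mathrm{Aut}(\mathcal{G}')$; (ii) $\mathrm{Co}(\mathcal{G})\subseteq\mathrm{Co}(\mathcal{G}')$ if and only if $\mathrm{AffAut}(\mathcal{G})\supseteq\mathrm{AffAut}(\mathcal{G}')$.
   Context: A field is $\langle F,+,\cdot,0,1\rangle$; an ordered field is $\langle F,+,\cdot,0,1,\le\rangle$. ''Definable'' means first-order definable without parameters. For a model $\mathfrak{M}$, $\mathrm{Co}(\mathfrak{M})$ is the set of all relations (of all finite arities $n\ge1$) on its universe that are definable in $\mathfrak{M}$, and $\mathrm{Aut}(\mathfrak{M})$ its automorphism group. For points of $F^d$: ${\mathsf{Col}}(\vec p,\vec q,\vec r)$ iff $\vec q=\vec p+\lambda(\vec r-\vec p)$ for some $\lambda\in F$ or $\vec r=\vec p$; for an ordered field, ${\mathsf{Bw}}(\vec p,\vec q,\vec r)$ iff $\vec q=\vec p+\lambda(\vec r-\vec p)$ for some $\lambda\in F$ with $0\le\lambda\le1$. An $n$-ary relation $\mathsf{R}$ on $F^d$ is definable over $\mathfrak{F}$ iff the corresponding $dn$-ary relation on $F$ obtained by listing coordinates of the $n$ points consecutively is definable in $\mathfrak{F}$. A coordinate geometry over a field (resp.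 ordered field) $\mathfrak{F}$ is a model with universe $F^d$, only relation symbols in its language, in which ${\mathsf{Col}}$ (resp. ${\mathsf{Bw}}$) is definable. It is FFD if it has finitely many relations, each definable over $\mathfrak{F}$. An affine transformation of $F^d$ is a composition of an invertible linear map followed by a translation; $\mathrm{AffAut}(\mathcal{G})=\mathrm{Aut}(\mathcal{G})\cap\{\text{affine transformations}\}$. *)

(* Defs.v *)
From HB Require Import structures.
From mathcomp Require Import all_boot all_order all_algebra.
Set Implicit Arguments. Unset Strict Implicit. Unset Printing Implicit Defensive.
Import Order.TTheory GRing.Theory Num.Theory.
Local Open Scope ring_scope.

(* No constants other than 0 and 1: definability is parameter-free.    *)
Inductive fterm : Type :=
| FVar of nat | FZero | FOne | FAdd of fterm & fterm | FMul of fterm & fterm.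

Inductive fform : Type :=
| FEq of fterm & fterm
| FLe of fterm & fterm          (* only allowed in the ordered-field language *)
| FFalse
| FImp of fform & fform
| FForall of nat & fform.

Fixpoint le_free (f : fform) : bool :=
  match f with
  | FLe _ _ => false
  | FImp a b => le_free a && le_free b
  | FForall _ a => le_free a
  | _ => true
  end.

Definition upd {T : Type} (e : nat -> T) (n : nat) (x : T) : nat -> T :=
  fun m => if m == n then x else e m.

Section FieldSemantics.
Variable F : fieldType.
(* [ole = Some le]: ordered field with order [le]; [ole = None]: field. *)
Variable ole : option (rel F).

Fixpoint feval (e : nat -> F) (t : fterm) : F :=
  match t with
  | FVar n => e n
  | FZero => 0
  | FOne => 1
  | FAdd a b => feval e a + feval e b
  | FMul a b => feval e a * feval e b
  end.

Fixpoint fholds (e : nat -> F) (f : fform) : Prop :=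
  match f with
  | FEq a b => feval e a = feval e b
  | FLe a b => match ole with Some le => le (feval e a) (feval e b) | None => False end
  | FFalse => False
  | FImp a b => fholds e a -> fholds e b
  | FForall n a => forall x : F, fholds (upd e n x) a
  end.

Definition allowed (f : fform) : bool :=
  match ole with Some _ => true | None => le_free f end.

(* an n-ary relation on F^d is definable over the (ordered) field iff the
   dn-ary relation on F obtained by listing the coordinates of the n points
   consecutively (point k, coordinate j  |->  variable k*d+j) is definable *)
Definition Fdefinable_pts (d n : nat) (R : ('I_n -> 'rV[F]_d) -> Prop) : Prop :=
  exists f : fform, allowed f /\
    forall e : nat -> F,
      R (fun k : 'I_n => \row_(j < d) e (k * d + j)%N) <-> fholds e f.

End FieldSemantics.

Inductive gform (I : Type) (ar : I -> nat) : Type :=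
| GEq of nat & nat
| GRel (i : I) of ('I_(ar i) -> nat)
| GFalse
| GImp of gform ar & gform ar
| GForall of nat & gform ar.

Arguments GFalse {I ar}.

Record geometry (F : fieldType) (d : nat) := Geometry {
  gI : finType;
  gar : gI -> nat;
  grel : forall i : gI, ('I_(gar i) -> 'rV[F]_d) -> Prop
}.

Section GeomSemantics.
Variables (F : fieldType) (d : nat) (G : geometry F d).

Fixpoint gholds (e : nat -> 'rV[F]_d) (f : gform (@gar F d G)) : Prop :=
  match f with
  | GEq x y => e x = e y
  | GRel i args => grel (e \o args)
  | GFalse => False
  | GImp a b => gholds e a -> gholds e b
  | GForall n a => forall x : 'rV[F]_d, gholds (upd e n x) a
  end.

(* parameter-free definability in G *)
Definition Gdefinable (n : nat) (R : ('I_n -> 'rV[F]_d) -> Prop) : Prop :=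
  exists f : gform (@gar F d G),
    forall e : nat -> 'rV[F]_d, R (fun k : 'I_n => e k) <-> gholds e f.

Definition Aut (f : 'rV[F]_d -> 'rV[F]_d) : Prop :=
  bijective f /\
  forall (i : gI G) (args : 'I_(gar i) -> 'rV[F]_d),
    grel args <-> grel (f \o args).

End GeomSemantics.

(* Co(G) ⊆ Co(G') : every relation (arity n >= 1) definable in G is
   definable in G' *)
Definition Co_sub (F : fieldType) (d : nat) (G G' : geometry F d) : Prop :=
  forall (n : nat), (0 < n)%N ->
    forall R : ('I_n -> 'rV[F]_d) -> Prop, Gdefinable G R -> Gdefinable G' R.

Definition Aut_sup (F : fieldType) (d : nat) (G G' : geometry F d) : Prop :=
  forall f, Aut G' f -> Aut G f.

(* affine transformations: invertible linear map followed by translation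
   (points are row vectors, linear maps act on the right) *)
Definition affine (F : fieldType) (d : nat) (f : 'rV[F]_d -> 'rV[F]_d) : Prop :=
  exists (A : 'M[F]_d) (b : 'rV[F]_d),
    A \in unitmx /\ forall x, f x = x *m A + b.

Definition AffAut (F : fieldType) (d : nat) (G : geometry F d) f : Prop :=
  Aut G f /\ affine f.

Definition AffAut_sup (F : fieldType) (d : nat) (G G' : geometry F d) : Prop :=
  forall f, AffAut G' f -> AffAut G f.

Definition Col (F : fieldType) (d : nat) (p q r : 'rV[F]_d) : Prop :=
  (exists l : F, q = p + l *: (r - p)) \/ r = p.

Definition Bw (F : fieldType) (le : rel F) (d : nat) (p q r : 'rV[F]_d) : Prop :=
  exists l : F, le 0 l /\ le l 1 /\ q = p + l *: (r - p).

Definition rel3 (T : Type) (P : T -> T -> T -> Prop) : ('I_3 -> T) -> Prop :=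
  fun v => P (v (@Ordinal 3 0 isT)) (v (@Ordinal 3 1 isT)) (v (@Ordinal 3 2 isT)).

Definition coord_geom (F : fieldType) (ole : option (rel F)) (d : nat)
  (G : geometry F d) : Prop :=
  match ole with
  | Some le => Gdefinable G (rel3 (@Bw F le d))
  | None => Gdefinable G (rel3 (@Col F d))
  end.

Definition FFD (F : fieldType) (ole : option (rel F)) (d : nat)
  (G : geometry F d) : Prop :=
  coord_geom ole G /\ forall i : gI G, Fdefinable_pts ole (@grel F d G i).

(* Main.v *)
Require Import Defs.
From HB Require Import structures.
From mathcomp Require Import all_boot all_order all_algebra.
From mathcomp Require Import zify ring lra.
From Stdlib Require Import Classical FunctionalExtensionality IndefiniteDescription.
Import Order.TTheory GRing.Theory Num.Theory.

Module P1.
Set Implicit Arguments. Unset Strict Implicit. Unset Printing Implicit Defensive.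
Local Open Scope ring_scope.

Lemma upd_same (T : Type) (e : nat -> T) n x : upd e n x n = x.
Proof. by rewrite /upd eqxx. Qed.
Lemma upd_ne (T : Type) (e : nat -> T) n x m : m <> n -> upd e n x m = e m.
Proof. by rewrite /upd => /eqP/negbTE ->. Qed.

Ltac usimp := repeat match goal with
  | |- context[upd ?e ?n ?x ?n] => rewrite (@upd_same _ e n x)
  | |- context[upd ?e ?n ?x ?m] => rewrite (@upd_ne _ e n x m); [|lia]
  end.

Ltac ifs := repeat match goal with |- context [if ?b then _ else _] =>
  let H := fresh "H" in case H: b end; rewrite ?eqxx //; try (exfalso; lia).

Section Logic.
Variables (F : fieldType) (d : nat) (G : geometry F d).
Local Notation pt := 'rV[F]_d.
Local Notation gf := (gform (@gar F d G)).

Definition GNot (a : gf) : gf := GImp a GFalse.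
Definition GAnd (a b : gf) : gf := GNot (GImp a (GNot b)).
Definition GOr (a b : gf) : gf := GImp (GNot a) b.
Definition GIff (a b : gf) : gf := GAnd (GImp a b) (GImp b a).
Definition GEx n (a : gf) : gf := GNot (GForall n (GNot a)).
Definition GE (x y : nat) : gf := GEq (@gar F d G) x y.
Definition GTrue : gf := GImp GFalse GFalse.

Lemma hNot e a : gholds e (GNot a) <-> ~ gholds e a.
Proof. by []. Qed.
Lemma hAnd e a b : gholds e (GAnd a b) <-> gholds e a /\ gholds e b.
Proof. rewrite /=; split; [move=> H; apply NNPP => H1; apply H => Ha Hb; apply H1; by split
  | by case=> Ha Hb H; apply: H]. Qed.
Lemma hOr e a b : gholds e (GOr a b) <-> gholds e a \/ gholds e b.
Proof. rewrite /=; split; [move=> H; case: (classic (gholds e a)); [by left| by move/H; right]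
  | by case=> H H1 //; case: (H1 H)]. Qed.
Lemma hIff e a b : gholds e (GIff a b) <-> (gholds e a <-> gholds e b).
Proof. by rewrite hAnd. Qed.
Lemma hEx e n a : gholds e (GEx n a) <-> exists x, gholds (upd e n x) a.
Proof. rewrite /=; split; [move=> H; apply NNPP => H1; apply H => x Hx; apply H1; by exists x
  | by case=> x Hx H; apply: (H x)]. Qed.
Lemma hE e x y : gholds e (GE x y) <-> e x = e y.
Proof. by []. Qed.
Lemma hTrue e : gholds e GTrue.
Proof. by []. Qed.

Fixpoint GAndM (T : eqType) (s : seq T) (f : T -> gf) : gf :=
  match s with [::] => GTrue | a :: l => GAnd (f a) (GAndM l f) end.
Lemma hAndM (T : eqType) e (s : seq T) f :
  gholds e (GAndM s f) <-> forall a, a \in s -> gholds e (f a).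
Proof.
elim: s => [|a l IH]; first by split=> // _ a.
rewrite [GAndM _ _]/= hAnd IH; split.
  by case=> Ha Hl b; rewrite in_cons => /orP [/eqP ->|]; [|apply: Hl].
move=> H; split; first by apply: H; rewrite mem_head.
by move=> b Hb; apply: H; rewrite in_cons Hb orbT.
Qed.

Fixpoint rn (s : nat -> nat) (f : gf) : gf :=
  match f with
  | GEq x y => GE (s x) (s y)
  | GRel i args => GRel (s \o args)
  | GFalse => GFalse
  | GImp a b => GImp (rn s a) (rn s b)
  | GForall n a => GForall (s n) (rn s a)
  end.
Lemma hrn s (si : injective s) f e : gholds e (rn s f) <-> gholds (e \o s) f.
Proof.
elim: f e => [x y|i args||a IHa b IHb|n a IH] e //=.
  by rewrite IHa IHb.
have E : forall x, upd e (s n) x \o s = upd (e \o s) n x.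
  by move=> x; apply: functional_extensionality => m; rewrite /upd /= (inj_eq si).
by split=> H x; move: (H x); rewrite IH E.
Qed.

Lemma aut_gholds f (Hf : Aut G f) (phi : gf) e : gholds e phi <-> gholds (f \o e) phi.
Proof.
case: Hf => [[g fg gf] Hr].
elim: phi e => [x y|i args||a IHa b IHb|n a IH] e /=.
- by split=> [->//|]; apply: (can_inj fg).
- exact: Hr.
- by [].
- by rewrite IHa IHb.
have E : forall x, f \o upd e n x = upd (f \o e) n (f x).
  by move=> x; apply: functional_extensionality => m; rewrite /upd /=; case: eqP.
split=> H x; first by rewrite -(gf x) -E -IH.
by rewrite IH E; apply: H.
Qed.

Fixpoint GAllB (Z m : nat) (a : gf) : gf :=
  match m with 0 => a | m.+1 => GForall Z (GAllB Z.+1 m a) end.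
Definition updB (T : Type) (e : nat -> T) Z m (g : nat -> T) : nat -> T :=
  fun v => if (Z <= v < Z + m)%N then g v else e v.
Lemma hAllB Z m a e : gholds e (GAllB Z m a) <-> forall g, gholds (updB e Z m g) a.
Proof.
elim: m Z e => [|m IH] Z e /=.
  have E : forall g, updB e Z 0 g = e.
    by move=> g; apply: functional_extensionality => v; rewrite /updB; case: ifP => //; lia.
  by split=> [H g|H]; [rewrite E | move: (H e); rewrite E].
have E : forall g, updB (upd e Z (g Z)) Z.+1 m g = updB e Z m.+1 g.
  move=> g; apply: functional_extensionality => v; rewrite /updB /upd.
  ifs; by move/eqP: H0 => ->.
split=> H.
  by move=> g; rewrite -E; move: (H (g Z)); rewrite IH; apply.
move=> x; rewrite IH => g.
have -> : updB (upd e Z x) Z.+1 m g = updB e Z m.+1 (upd g Z x).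
  apply: functional_extensionality => v; rewrite /updB /upd.
  ifs.
exact: H.
Qed.

Definition GExB (Z m : nat) (a : gf) : gf := GNot (GAllB Z m (GNot a)).
Lemma hExB Z m a e : gholds e (GExB Z m a) <-> exists g, gholds (updB e Z m g) a.
Proof.
rewrite /GExB hNot hAllB; split.
  move=> H; apply: NNPP => H1; apply: H => g Hg; apply: H1; by exists g.
by case=> g Hg H; apply: (H g).
Qed.

End Logic.

End P1.
Import P1.

Module P2.
Set Implicit Arguments. Unset Strict Implicit. Unset Printing Implicit Defensive.
Local Open Scope ring_scope.

Ltac vring := apply/rowP => ?; rewrite !mxE; ring.
Ltac vfield := apply/rowP => ?; rewrite !mxE; field; repeat (apply/andP; split); done.

Section Vec.
Variables (F : fieldType) (d : nat).
Local Notation pt := 'rV[F]_d.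
Local Notation Col := (@Col F d).

Lemma colP (p q r : pt) : r <> p -> (Col p q r <-> exists l, q = p + l *: (r - p)).
Proof. by move=> H; rewrite /Col; split=> [[]|] //; left. Qed.

Lemma col_triv1 (p q : pt) : Col p p q.
Proof. by left; exists 0; rewrite scale0r addr0. Qed.
Lemma col_triv2 (p q : pt) : Col p q q.
Proof. by left; exists 1; rewrite scale1r addrC subrK. Qed.

Lemma ncol_neq (p q r : pt) : ~ Col p q r -> r <> p /\ q <> p /\ q <> r.
Proof.
move=> H; split; first by move=> E; apply: H; right.
split; move=> E; apply: H; subst; [exact: col_triv1 | exact: col_triv2].
Qed.

Lemma LI (p q r : pt) (a b : F) : ~ Col p q r -> a *: (q - p) + b *: (r - p) = 0 -> a = 0 /\ b = 0.
Proof.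
move=> H E.
have [rp _] := ncol_neq H.
have a0 : a = 0.
  apply: NNPP => /eqP a0; apply: H; left; exists (- (b / a)).
  have E2 : a *: (q - p) = - (b *: (r - p)) by apply/eqP; rewrite -addr_eq0 E.
  have -> : q = p + a^-1 *: (a *: (q - p)) by rewrite scalerA mulVf // scale1r addrC subrK.
  by rewrite E2 scalerN scalerA mulrC scaleNr.
split=> //; move: E; rewrite a0 scale0r add0r => /eqP; rewrite scaler_eq0 subr_eq0.
by case/orP=> /eqP.
Qed.

Lemma col_sym_line (p q r : pt) l : q = p + l *: (r - p) -> Col p q r.
Proof. by move=> ->; left; exists l. Qed.

Lemma offline (hd : (1 < d)%N) (p q : pt) : q <> p -> exists w, ~ Col p w q.
Proof.
move=> qp.
pose i0 : 'I_d := Ordinal (ltnW hd). pose i1 : 'I_d := Ordinal hd.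
pose del (i : 'I_d) : pt := \row_j (j == i)%:R.
case: (classic (Col p (p + del i0) q)) => [H0|H0]; last by exists (p + del i0).
case: (classic (Col p (p + del i1) q)) => [H1|H1]; last by exists (p + del i1).
exfalso; move/(colP _ qp): H0 => [l0 E0]; move/(colP _ qp): H1 => [l1 E1].
move/(congr1 (fun v => v - p)): E0; move/(congr1 (fun v => v - p)): E1.
rewrite ![p + _ - p]addrC !addKr => E1 E0.
have l0n : l0 != 0.
  apply/eqP=> l0z; move/rowP: E0 => /(_ i0); rewrite l0z scale0r !mxE eqxx.
  by move/eqP; rewrite oner_eq0.
have : del i1 = (l1 / l0) *: del i0 by rewrite E0 E1 scalerA mulfVK.
move/rowP=> /(_ i1); rewrite !mxE eqxx.
have -> : (i1 == i0) = false by apply/eqP => /(congr1 val) /=.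
by rewrite mulr0 => /eqP; rewrite oner_eq0.
Qed.


Lemma veq_lin (x y p q : pt) (c : F) : x = y -> p - q = c *: (x - y) -> p = q.
Proof. by move=> -> ; rewrite subrr scaler0 => /eqP; rewrite subr_eq0 => /eqP. Qed.

Variable t0 : F.
Hypothesis t00 : t0 != 0.
Hypothesis t01 : t0 != 1.

Definition Plsem (c k a b : pt) := b = c \/ exists p q, Col c p k /\ Col c q a /\ p <> q /\ Col p b q.
Definition PVsem (a b c k : pt) := (Col c a k /\ Col c b k) \/
  (~ Col c a k /\ (b = a \/ (Plsem c k a b /\ ~ (exists z, Col c z k /\ Col a z b)))).

Lemma PVsemP (a b c k : pt) : k <> c -> (PVsem a b c k <-> exists m, b - a = m *: (k - c)).
Proof.
move=> kc; case: (classic (Col c a k)) => [Hca|Hca].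
  move/(colP _ kc): (Hca) => [al Ea]; split.
    case=> [[_ /(colP _ kc) [be Eb]]|[]//].
    by exists (be - al); subst; vring.
  case=> m Em; left; split=> //; apply/(colP _ kc); exists (al + m).
  by apply: (veq_lin (c := -1) (esym Em)); rewrite Ea; vring.
have [_ [ac _]] := ncol_neq Hca.
split.
  case=> [[]//|[_ [->|[Hpl Hnm]]]]; first by exists 0; rewrite subrr scale0r.
  case: Hpl => [Ebc|[p [q [Hp [Hq [pq Hb]]]]]].
    exfalso; apply: Hnm; exists c; split; first exact: col_triv1.
    by rewrite Ebc; exact: col_triv2.
  move/(colP _ kc): Hp => [s Ep]; move/(colP _ ac): Hq => [r Eq].
  have qp : q <> p by move=> E; apply: pq.
  move/(colP _ qp): Hb => [t Eb].
  case: (eqVneq (t * r) 1) => [tr1|tr1].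
    have t0' : t != 0 by apply/eqP => t0'; move: tr1; rewrite t0' mul0r => /eqP; rewrite eq_sym oner_eq0.
    have Er : r = t^-1 by apply: (mulfI t0'); rewrite tr1 mulfV.
    exists ((1 - t) * s); subst; vfield.
  exfalso; apply: Hnm.
  have h1 : 1 - t * r != 0 by rewrite subr_eq0 eq_sym.
  exists (a + (1 - t * r)^-1 *: (b - a)); split; last by apply: col_sym_line.
  apply: (col_sym_line (l := (1 - t * r)^-1 * ((1 - t) * s))).
  subst; vfield.
case=> m Em.
right; split=> //.
case: (eqVneq m 0) => [m0|m0].
  by left; move: Em; rewrite m0 scale0r => /eqP; rewrite subr_eq0 => /eqP.
right.
have ba : b <> a by move=> E; move: Em; rewrite E subrr => /esym /eqP; rewrite scaler_eq0 (negbTE m0) subr_eq0 => /eqP.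
have t1 : 1 - t0 != 0 by rewrite subr_eq0 eq_sym.
split.
  right; exists (c + (m / (1 - t0)) *: (k - c)); exists (c + t0^-1 *: (a - c)).
  split; first exact: col_sym_line.
  split; first exact: col_sym_line.
  split.
    move=> /eqP; rewrite -subr_eq0 => /eqP E0.
    have := @LI c a k (- t0^-1) (m / (1 - t0)) Hca.
    case.
      by rewrite -E0; vring.
    by move=> /eqP; rewrite oppr_eq0 invr_eq0 (negbTE t00).
  apply: (col_sym_line (l := t0)).
  apply: (veq_lin (c := 1) Em); vfield.
case=> z [/(colP _ kc) [s Ez] /(colP _ ba) [l Ez2]].
apply: Hca; apply: (col_sym_line (l := s - l * m)).
rewrite Ez Em in Ez2.
apply: (veq_lin (c := -1) Ez2); rewrite !scalerA; vring.
Qed.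

Lemma PV_intro (a b c k : pt) m : k <> c -> b - a = m *: (k - c) -> PVsem a b c k.
Proof. by move=> kc E; apply/(PVsemP _ _ kc); exists m. Qed.

Lemma Thales (o u l x y : pt) lam : ~ Col o x u -> l = o + lam *: (u - o) ->
  (Col o y x /\ PVsem l y u x <-> y = o + lam *: (x - o)).
Proof.
move=> Hn El; have [uo [xo xu]] := ncol_neq Hn.
have ux : x <> u by move=> E; apply: xu.
split.
  case=> /(colP _ xo) [s Ey] /(PVsemP _ _ ux) [m Em].
  have E0 : (s - m) *: (x - o) + (m - lam) *: (u - o) = (y - l) - m *: (x - u).
    by subst; vring.
  rewrite Em subrr in E0.
  have [/eqP h1 /eqP h2] := LI Hn E0.
  move: h1 h2; rewrite !subr_eq0 => /eqP h1 /eqP h2; subst; done.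
move=> Ey; split; first exact: (col_sym_line Ey).
by apply: (PV_intro (m := lam) ux); subst; vring.
Qed.

Definition Scsem (o u l x y : pt) :=
  (~ Col o x u /\ (Col o y x /\ PVsem l y u x)) \/
  (Col o x u /\ exists w w', ~ Col o w u /\ ((Col o w' w /\ PVsem l w' u w) /\ (Col o y u /\ PVsem w' y w x))).

Lemma ScsemP (hd : (1 < d)%N) (o u l x y : pt) lam : u <> o -> l = o + lam *: (u - o) ->
  (Scsem o u l x y <-> y = o + lam *: (x - o)).
Proof.
move=> uo El; split.
  case=> [[Hn H]|[Hc [w [w' [Hw [Hw' [Hy1 Hy2]]]]]]]; first by rewrite -(Thales _ Hn El).
  rewrite (Thales _ Hw El) in Hw'.
  have [_ [wo wu]] := ncol_neq Hw.
  have xw : x <> w by move=> E; apply: Hw; rewrite -E.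
  move/(colP _ uo): Hc => [xi Ex]; move/(colP _ uo): Hy1 => [et Ey].
  move/(PVsemP _ _ xw): Hy2 => [m Em].
  have E0 : (m - lam) *: (w - o) + (et - m * xi) *: (u - o) = (y - w') - m *: (x - w).
    by subst; vring.
  rewrite Em subrr in E0.
  have [/eqP h1 /eqP h2] := LI Hw E0.
  move: h1 h2; rewrite !subr_eq0 => /eqP h1 /eqP h2; subst; vring.
move=> Ey; case: (classic (Col o x u)) => Hc; last by left; split=> //; rewrite (Thales _ Hc El).
right; split=> //.
have [w Hw] := offline hd uo.
exists w, (o + lam *: (w - o)); split=> //; split; first by rewrite (Thales _ Hw El).
have xw : x <> w by move=> E; apply: Hw; rewrite -E.
move/(colP _ uo): (Hc) => [xi Ex].
split; first by apply: (col_sym_line (l := lam * xi)); subst; vring.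
by apply: (PV_intro (m := lam) xw); subst; vring.
Qed.

Definition ENsem (a b c k : pt) := PVsem c k a b /\ PVsem b k a c.
Lemma ENsemP (a b c k : pt) : ~ Col a c b -> (ENsem a b c k <-> k - c = b - a).
Proof.
move=> Hn; have [ba [ca cb]] := ncol_neq Hn.
split.
  case=> /(PVsemP _ _ ba) [m Em] /(PVsemP _ _ ca) [n En].
  have E0 : (1 - n) *: (c - a) + (m - 1) *: (b - a) = (k - b - n *: (c - a)) - (k - c - m *: (b - a)).
    by vring.
  rewrite Em En !subrr ?subr0 in E0.
  have [_ /eqP h2] := LI Hn E0.
  by move: h2; rewrite subr_eq0 => /eqP h2; rewrite Em h2 scale1r.
move=> E; split; first by apply: (PV_intro (m := 1) ba); rewrite E scale1r.
apply: (PV_intro (m := 1) ca); apply: (veq_lin (c := 1) E); vring.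
Qed.

Definition Eqvsem (a b c k : pt) :=
  (a = b /\ k = c) \/ ((~ Col a c b /\ ENsem a b c k) \/
  (a <> b /\ (Col a c b /\ exists w w', ~ Col a w b /\ (ENsem a b w w' /\ ENsem w w' c k)))).

Lemma EqvsemP (hd : (1 < d)%N) (a b c k : pt) : Eqvsem a b c k <-> k - c = b - a.
Proof.
have key : forall w w', a <> b -> Col a c b -> ~ Col a w b -> w' - w = b - a -> ~ Col w c w'.
  move=> w w' ab Hc Hw Ew Hc2.
  have w'w : w' <> w by move=> E; apply: ab; move: Ew; rewrite E subrr => /eqP; rewrite eq_sym subr_eq0 => /eqP.
  have ba : b <> a by move=> E; apply: ab.
  move/(colP _ ba): Hc => [g Ec]; move/(colP _ w'w): Hc2 => [h Eh].
  apply: Hw; apply: (col_sym_line (l := g - h)).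
  rewrite Ew in Eh; apply: (veq_lin (c := -1) Eh); subst; vring.
split.
  case=> [[-> ->]|[[Hn H]|[ab [Hc [w [w' [Hw [H1 H2]]]]]]]]; first by rewrite !subrr.
    by rewrite -(ENsemP _ Hn).
  have Ew := (ENsemP _ Hw).1 H1.
  by rewrite ((ENsemP _ (key _ _ ab Hc Hw Ew)).1 H2).
move=> E.
case: (eqVneq a b) => [ab|/eqP ab].
  by left; split=> //; move: E; rewrite ab subrr => /eqP; rewrite subr_eq0 => /eqP.
right; case: (classic (Col a c b)) => Hc; last by left; split=> //; rewrite (ENsemP _ Hc).
right; split=> //; split=> //.
have ba : b <> a by move=> E'; apply: ab.
have [w Hw] := offline hd ba.
have Ew : (w + (b - a)) - w = b - a by rewrite addrC addKr.
exists w, (w + (b - a)); split=> //; split; first by rewrite (ENsemP _ Hw).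
by rewrite (ENsemP _ (key _ _ ab Hc Hw Ew)) E.
Qed.

End Vec.

Section VecOrd.
Variables (F : realFieldType) (d : nat).
Local Notation pt := 'rV[F]_d.
Local Notation Col := (@Col F d).
Local Notation Bw := (@Bw F (fun x y : F => x <= y) d).

Lemma ColBw (p q r : pt) : Col p q r <-> (r = p \/ (Bw p q r \/ (Bw p r q \/ Bw q p r))).
Proof.
split.
  case=> [[l El]|]; last by left.
  case: (lerP 0 l) => l0.
    case: (lerP l 1) => l1; first by right; left; exists l.
    have lpos : 0 < l := lt_trans ltr01 l1.
    have ln : l != 0 := lt0r_neq0 lpos.
    right; right; left; exists l^-1.
    split; first by rewrite invr_ge0 ltW.
    split; first by rewrite invf_le1 // ltW.
    subst; vfield.
  right; right; right; exists (- l / (1 - l)).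
  have h : 0 < 1 - l by rewrite subr_gt0 (lt_trans l0).
  split; first by rewrite divr_ge0 // ?oppr_ge0 ltW.
  split; first by rewrite ler_pdivrMr // mul1r; lra.
  subst; apply/rowP => j; rewrite !mxE; field; exact: lt0r_neq0.
case=> [->|[[l [_ [_ El]]]|[[l [l0 [l1 El]]]|[l [l0 [l1 El]]]]]]; first by right.
- by left; exists l.
- case: (eqVneq l 0) => [lz|ln]; first by right; rewrite El lz scale0r addr0.
  left; exists l^-1; subst; vfield.
- case: (eqVneq l 1) => [lz|ln]; first by right; rewrite El lz scale1r addrC subrK.
  left; exists (- l / (1 - l)).
  have h : 1 - l != 0 by rewrite subr_eq0 eq_sym.
  apply: (veq_lin (c := - (1 - l)^-1) El); vfield.
Qed.

Lemma NonNegP (o u c : pt) g : u <> o -> c = o + g *: (u - o) ->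
  (Bw o c u \/ Bw o u c <-> 0 <= g).
Proof.
move=> uo Ec.
have inj : forall x y : F, o + x *: (u - o) = o + y *: (u - o) -> x = y.
  move=> x y /addrI /eqP; rewrite -subr_eq0 -scalerBl scaler_eq0 subr_eq0 => /orP [/eqP //|].
  by rewrite subr_eq0 => /eqP.
split.
  case=> [[l [l0 [_ El]]]|[l [l0 [_ El]]]]; first by rewrite Ec in El; rewrite (inj _ _ El).
  have E1 : o + (l * g) *: (u - o) = o + 1 *: (u - o) by rewrite [in RHS]El Ec; vring.
  have lg := inj _ _ E1.
  case: (lerP 0 g) => // g0.
  have : l * g <= 0 by rewrite mulr_ge0_le0 // ltW.
  by rewrite lg ler10.
move=> g0; case: (lerP g 1) => g1; first by left; exists g.
have gp : 0 < g := lt_trans ltr01 g1.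
have gn : g != 0 := lt0r_neq0 gp.
right; exists g^-1; split; first by rewrite invr_ge0 ltW.
split; first by rewrite invf_le1 // ltW.
rewrite Ec; vfield.
Qed.

End VecOrd.

End P2.
Import P2.

Module P3.
Set Implicit Arguments. Unset Strict Implicit. Unset Printing Implicit Defensive.
Local Open Scope ring_scope.

Section Build.
Variables (F : fieldType) (d : nat) (G : geometry F d).
Local Notation pt := 'rV[F]_d.
Local Notation gf := (gform (@gar F d G)).
Local Notation Col := (@Col F d).
Variable colf : nat -> nat -> nat -> nat -> gf.
Hypothesis colfP : forall N a b c e, (a < N)%N -> (b < N)%N -> (c < N)%N ->
  (gholds e (colf N a b c) <-> Col (e a) (e b) (e c)).

Lemma cAnd e (A B : gf) P Q : (gholds e A <-> P) -> (gholds e B <-> Q) -> (gholds e (GAnd A B) <-> P /\ Q).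
Proof. by move=> H1 H2; rewrite hAnd H1 H2. Qed.
Lemma cOr e (A B : gf) P Q : (gholds e A <-> P) -> (gholds e B <-> Q) -> (gholds e (GOr A B) <-> P \/ Q).
Proof. by move=> H1 H2; rewrite hOr H1 H2. Qed.
Lemma cNot e (A : gf) P : (gholds e A <-> P) -> (gholds e (GNot A) <-> ~ P).
Proof. by move=> H1; rewrite hNot H1. Qed.
Lemma cEx e n (A : gf) (P : pt -> Prop) : (forall x, gholds (upd e n x) A <-> P x) -> (gholds e (GEx n A) <-> exists x, P x).
Proof. move=> H; rewrite hEx; split; case=> x Hx; exists x; by apply/H. Qed.
Lemma cE e x y (p q : pt) : e x = p -> e y = q -> (gholds e (GE G x y) <-> p = q).
Proof. by move=> <- <-. Qed.
Lemma cCol N a b c e (p q r : pt) : (a < N)%N -> (b < N)%N -> (c < N)%N ->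
  e a = p -> e b = q -> e c = r -> (gholds e (colf N a b c) <-> Col p q r).
Proof. by move=> ha hb hc <- <- <-; apply: colfP. Qed.

Ltac gs_extra := fail.
Ltac gs := repeat first [ apply: cAnd | apply: cOr | apply: cNot | (apply: cEx => ?) | apply: cE
  | apply: cCol | gs_extra | (usimp; first [reflexivity | assumption]) | lia ].

Definition Plf N c k a b : gf := GOr (GE G b c) (GEx N (GEx N.+1 (GAnd (colf N.+2 c N k)
  (GAnd (colf N.+2 c N.+1 a) (GAnd (GNot (GE G N N.+1)) (colf N.+2 N b N.+1)))))).

Lemma cPl N c k a b e pc pk pa pb : (c < N)%N -> (k < N)%N -> (a < N)%N -> (b < N)%N ->
  e c = pc -> e k = pk -> e a = pa -> e b = pb ->
  (gholds e (Plf N c k a b) <-> Plsem pc pk pa pb).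
Proof. move=> *; rewrite /Plf /Plsem; gs. Qed.


Ltac gs_extra ::= first [apply: cPl].

Definition PVf N a b c k : gf := GOr (GAnd (colf N c a k) (colf N c b k))
  (GAnd (GNot (colf N c a k)) (GOr (GE G b a) (GAnd (Plf N c k a b)
     (GNot (GEx N (GAnd (colf N.+1 c N k) (colf N.+1 a N b))))))).
Lemma cPV N a b c k e pa pb pc pk : (a < N)%N -> (b < N)%N -> (c < N)%N -> (k < N)%N ->
  e a = pa -> e b = pb -> e c = pc -> e k = pk ->
  (gholds e (PVf N a b c k) <-> PVsem pa pb pc pk).
Proof. move=> *; rewrite /PVf /PVsem; gs. Qed.

Ltac gs_extra ::= first [apply: cPl | apply: cPV].

Definition Scf N o u l x y : gf :=
  GOr (GAnd (GNot (colf N o x u)) (GAnd (colf N o y x) (PVf N l y u x)))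
      (GAnd (colf N o x u) (GEx N (GEx N.+1 (GAnd (GNot (colf N.+2 o N u))
         (GAnd (GAnd (colf N.+2 o N.+1 N) (PVf N.+2 l N.+1 u N))
               (GAnd (colf N.+2 o y u) (PVf N.+2 N.+1 y N x))))))).
Lemma cSc N o u l x y e po pu pl px py : (o < N)%N -> (u < N)%N -> (l < N)%N -> (x < N)%N -> (y < N)%N ->
  e o = po -> e u = pu -> e l = pl -> e x = px -> e y = py ->
  (gholds e (Scf N o u l x y) <-> Scsem po pu pl px py).
Proof. move=> *; rewrite /Scf /Scsem; gs. Qed.

Definition ENf N a b c k : gf := GAnd (PVf N c k a b) (PVf N b k a c).
Lemma cEN N a b c k e pa pb pc pk : (a < N)%N -> (b < N)%N -> (c < N)%N -> (k < N)%N ->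
  e a = pa -> e b = pb -> e c = pc -> e k = pk ->
  (gholds e (ENf N a b c k) <-> ENsem pa pb pc pk).
Proof. move=> *; rewrite /ENf /ENsem; gs. Qed.

Ltac gs_extra ::= first [apply: cPl | apply: cPV | apply: cEN].

Definition Eqvf N a b c k : gf :=
  GOr (GAnd (GE G a b) (GE G k c)) (GOr (GAnd (GNot (colf N a c b)) (ENf N a b c k))
   (GAnd (GNot (GE G a b)) (GAnd (colf N a c b) (GEx N (GEx N.+1 (GAnd (GNot (colf N.+2 a N b))
      (GAnd (ENf N.+2 a b N N.+1) (ENf N.+2 N N.+1 c k)))))))).
Lemma cEqv N a b c k e pa pb pc pk : (a < N)%N -> (b < N)%N -> (c < N)%N -> (k < N)%N ->
  e a = pa -> e b = pb -> e c = pc -> e k = pk ->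
  (gholds e (Eqvf N a b c k) <-> Eqvsem pa pb pc pk).
Proof. move=> *; rewrite /Eqvf /Eqvsem; gs. Qed.


Ltac gs_extra ::= first [apply: cPl | apply: cPV | apply: cEN | apply: cEqv | apply: cSc].

Variable t0 : F.
Hypothesis t00 : t0 != 0.
Hypothesis t01 : t0 != 1.
Hypothesis hd : (1 < d)%N.

Definition emb (o u : pt) (l : F) : pt := o + l *: (u - o).
Lemma embI (o u : pt) l m : u <> o -> emb o u l = emb o u m -> l = m.
Proof.
move=> uo /addrI /eqP; rewrite -subr_eq0 -scalerBl scaler_eq0 subr_eq0 => /orP [/eqP //|].
by rewrite subr_eq0 => /eqP.
Qed.

Definition OnLf N o u p : gf := colf N o p u.
Lemma cOnL N o u p e : (o < N)%N -> (u < N)%N -> (p < N)%N -> e u <> e o ->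
  (gholds e (OnLf N o u p) <-> exists l, e p = emb (e o) (e u) l).
Proof. by move=> *; rewrite colfP // P2.colP. Qed.

Lemma cAdd N o u a b c e al be : (o < N)%N -> (u < N)%N -> (a < N)%N -> (b < N)%N -> (c < N)%N ->
  e a = emb (e o) (e u) al -> e b = emb (e o) (e u) be ->
  (gholds e (Eqvf N o a b c) <-> e c = emb (e o) (e u) (al + be)).
Proof.
move=> ho hu ha hb hc Ea Eb; rewrite (cEqv _ _ _ _ erefl erefl erefl erefl) // (EqvsemP t00 t01 hd).
rewrite Ea Eb /emb; split=> E.
  by apply: (veq_lin (c := 1) E); vring.
by rewrite E; vring.
Qed.

Lemma cMul N o u a b c e al : (o < N)%N -> (u < N)%N -> (a < N)%N -> (b < N)%N -> (c < N)%N ->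
  e u <> e o -> e a = emb (e o) (e u) al ->
  (gholds e (Scf N o u a b c) <-> e c = e o + al *: (e b - e o)).
Proof.
move=> ho hu ha hb hc uo Ea; rewrite (cSc _ _ _ _ _ erefl erefl erefl erefl erefl) //.
exact: (ScsemP t00 t01 hd _ _ uo Ea).
Qed.

Variable ole : option (rel F).
Variable nnf : nat -> nat -> nat -> nat -> gf.
Variable lep : F -> Prop.
Hypothesis nnfP : forall N o u c e g, (o < N)%N -> (u < N)%N -> (c < N)%N -> e u <> e o ->
  e c = emb (e o) (e u) g -> (gholds e (nnf N o u c) <-> lep g).
Hypothesis hlep : forall a b, (match ole with Some le => le a b | None => False end) <-> lep (b - a).

Definition Lef N o u a b : gf := GEx N (GAnd (Eqvf N.+1 o a N b) (nnf N.+1 o u N)).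
Lemma cLe N o u a b e al be : (o < N)%N -> (u < N)%N -> (a < N)%N -> (b < N)%N ->
  e u <> e o -> e a = emb (e o) (e u) al -> e b = emb (e o) (e u) be ->
  (gholds e (Lef N o u a b) <-> lep (be - al)).
Proof.
move=> ho hu ha hb uo Ea Eb; rewrite /Lef hEx; split.
  case=> x; rewrite hAnd (cEqv _ _ _ _ erefl erefl erefl erefl) ?(EqvsemP t00 t01 hd); try lia.
  usimp; case=> Ex.
  rewrite (nnfP (g := be - al)) //; try lia; usimp => //.
  apply: (veq_lin (c := -1) Ex); rewrite Ea Eb /emb; vring.
move=> H; exists (emb (e o) (e u) (be - al)).
rewrite hAnd (cEqv _ _ _ _ erefl erefl erefl erefl) ?(EqvsemP t00 t01 hd); try lia.
usimp; split; first by rewrite Ea Eb /emb; vring.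
rewrite (nnfP (g := be - al)) //; try lia; usimp => //.
Qed.

Fixpoint tmax (t : fterm) : nat := match t with
  | FVar v => v.+1 | FAdd a b => maxn (tmax a) (tmax b) | FMul a b => maxn (tmax a) (tmax b)
  | _ => 0%N end.
Fixpoint fmax (f : fform) : nat := match f with
  | FEq a b => maxn (tmax a) (tmax b) | FLe a b => maxn (tmax a) (tmax b)
  | FFalse => 0%N | FImp a b => maxn (fmax a) (fmax b) | FForall n a => maxn n.+1 (fmax a) end.

Fixpoint Valf B N o u (t : fterm) (z : nat) : gf := match t with
  | FVar v => GE G z (B + v)
  | FZero => GE G z o
  | FOne => GE G z u
  | FAdd a b => GEx N (GEx N.+1 (GAnd (Valf B N.+2 o u a N) (GAnd (Valf B N.+2 o u b N.+1) (Eqvf N.+2 o N N.+1 z))))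
  | FMul a b => GEx N (GEx N.+1 (GAnd (Valf B N.+2 o u a N) (GAnd (Valf B N.+2 o u b N.+1) (Scf N.+2 o u N N.+1 z))))
  end.

Lemma Valf_add B N o u a b z : Valf B N o u (FAdd a b) z =
  GEx N (GEx N.+1 (GAnd (Valf B N.+2 o u a N) (GAnd (Valf B N.+2 o u b N.+1) (Eqvf N.+2 o N N.+1 z)))).
Proof. by []. Qed.
Lemma Valf_mul B N o u a b z : Valf B N o u (FMul a b) z =
  GEx N (GEx N.+1 (GAnd (Valf B N.+2 o u a N) (GAnd (Valf B N.+2 o u b N.+1) (Scf N.+2 o u N N.+1 z)))).
Proof. by []. Qed.

Lemma cVal B M o u t : forall N z e lam, (tmax t <= M)%N -> (B + M <= N)%N -> (o < N)%N -> (u < N)%N ->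
  (z < N)%N -> e u <> e o -> (forall v, (v < M)%N -> e (B + v) = emb (e o) (e u) (lam v)) ->
  (gholds e (Valf B N o u t z) <-> e z = emb (e o) (e u) (feval lam t)).
Proof.
elim: t => [v|||a IHa b IHb|a IHa b IHb] N z e lam ht hBN ho hu hz uo Hl; simpl in ht.
- by rewrite /= Hl //; lia.
- by rewrite /= /emb scale0r addr0.
- by rewrite /= /emb scale1r addrC subrK.
- rewrite Valf_add hEx; split.
    case=> x; rewrite hEx => -[y]; rewrite !hAnd (IHa N.+2 N _ lam) ?(IHb N.+2 N.+1 _ lam) //; try lia; usimp; try done; try (by move=> v hv; usimp; apply: Hl).
    move=> [Ex [Ey]]; rewrite (cAdd (u := u) (al := feval lam a) (be := feval lam b)) //; try lia; usimp => //.
  move=> Ez; exists (emb (e o) (e u) (feval lam a)); rewrite hEx.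
  exists (emb (e o) (e u) (feval lam b)); rewrite !hAnd (IHa N.+2 N _ lam) ?(IHb N.+2 N.+1 _ lam) //; try lia; usimp; try done; try (by move=> v hv; usimp; apply: Hl).
  split=> //; split=> //.
  by rewrite (cAdd (u := u) (al := feval lam a) (be := feval lam b)) //; try lia; usimp.
- rewrite Valf_mul hEx; split.
    case=> x; rewrite hEx => -[y]; rewrite !hAnd (IHa N.+2 N _ lam) ?(IHb N.+2 N.+1 _ lam) //; try lia; usimp; try done; try (by move=> v hv; usimp; apply: Hl).
    move=> [Ex [Ey]]; rewrite (cMul (u := u) (al := feval lam a)) //; try lia; usimp => //.
    by rewrite Ey /emb => ->; rewrite /=; vring.
  move=> Ez; exists (emb (e o) (e u) (feval lam a)); rewrite hEx.
  exists (emb (e o) (e u) (feval lam b)); rewrite !hAnd (IHa N.+2 N _ lam) ?(IHb N.+2 N.+1 _ lam) //; try lia; usimp; try done; try (by move=> v hv; usimp; apply: Hl).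
  split=> //; split=> //.
  rewrite (cMul (u := u) (al := feval lam a)) //; try lia; usimp => //.
  move: Ez; rewrite /emb /= => ->; vring.
Qed.

End Build.

End P3.
Import P3.

Module P4.
Set Implicit Arguments. Unset Strict Implicit. Unset Printing Implicit Defensive.
Local Open Scope ring_scope.

Section Tr.
Variables (F : fieldType) (d : nat) (G : geometry F d).
Local Notation pt := 'rV[F]_d.
Local Notation gf := (gform (@gar F d G)).
Local Notation Col := (@Col F d).
Variable colf : nat -> nat -> nat -> nat -> gf.
Hypothesis colfP : forall N a b c e, (a < N)%N -> (b < N)%N -> (c < N)%N ->
  (gholds e (colf N a b c) <-> Col (e a) (e b) (e c)).
Variable t0 : F.
Hypothesis t00 : t0 != 0.
Hypothesis t01 : t0 != 1.
Hypothesis hd : (1 < d)%N.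
Variable ole : option (rel F).
Variable nnf : nat -> nat -> nat -> nat -> gf.
Variable lep : F -> Prop.
Hypothesis nnfP : forall N o u c e g, (o < N)%N -> (u < N)%N -> (c < N)%N -> e u <> e o ->
  e c = emb (e o) (e u) g -> (gholds e (nnf N o u c) <-> lep g).
Hypothesis hlep : forall a b, (match ole with Some le => le a b | None => False end) <-> lep (b - a).

Fixpoint Trf B N o u (f : fform) : gf := match f with
  | FEq a b => GEx N (GEx N.+1 (GAnd (Valf colf B N.+2 o u a N) (GAnd (Valf colf B N.+2 o u b N.+1) (GE G N N.+1))))
  | FLe a b => GEx N (GEx N.+1 (GAnd (Valf colf B N.+2 o u a N) (GAnd (Valf colf B N.+2 o u b N.+1) (Lef colf nnf N.+2 o u N N.+1))))
  | FFalse => GFalse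
  | FImp a b => GImp (Trf B N o u a) (Trf B N o u b)
  | FForall n a => GForall (B + n) (GImp (OnLf colf N o u (B + n)) (Trf B N o u a))
  end.

Lemma cTr B M N o u f : forall e lam, (fmax f <= M)%N -> (B + M <= N)%N -> (o < B)%N -> (u < B)%N ->
  e u <> e o -> (forall v, (v < M)%N -> e (B + v) = emb (e o) (e u) (lam v)) ->
  (gholds e (Trf B N o u f) <-> fholds ole lam f).
Proof.
elim: f => [a b|a b||a IHa b IHb|n a IH] e lam hf hBN ho hu uo Hl; simpl in hf.
- rewrite [Trf _ _ _ _ _]/= -/(GEx _ _) hEx; split.
    case=> x; rewrite hEx => -[y]; rewrite !hAnd.
    rewrite (cVal colfP t00 t01 hd (M := M) (lam := lam)) ?(cVal colfP t00 t01 hd (M := M) (lam := lam)); try lia; usimp => //; try (by move=> v hv; usimp; apply: Hl).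
    case=> [-> [->]]; rewrite hE; usimp; exact: (embI uo).
  move=> E; simpl in E; exists (emb (e o) (e u) (feval lam a)); rewrite hEx; exists (emb (e o) (e u) (feval lam b)).
  rewrite !hAnd.
  rewrite (cVal colfP t00 t01 hd (M := M) (lam := lam)) ?(cVal colfP t00 t01 hd (M := M) (lam := lam)); try lia; usimp => //; try (by move=> v hv; usimp; apply: Hl).
  by rewrite hE; usimp; rewrite /= E.
- rewrite [Trf _ _ _ _ _]/= -/(GEx _ _) hEx; split.
    case=> x; rewrite hEx => -[y]; rewrite !hAnd.
    rewrite (cVal colfP t00 t01 hd (M := M) (lam := lam)) ?(cVal colfP t00 t01 hd (M := M) (lam := lam)); try lia; usimp => //; try (by move=> v hv; usimp; apply: Hl).
    case=> [Ex [Ey]]; rewrite (cLe colfP t00 t01 hd nnfP (al := feval lam a) (be := feval lam b)); try lia; usimp => //.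
    by rewrite /= hlep.
  move=> E; simpl in E; exists (emb (e o) (e u) (feval lam a)); rewrite hEx; exists (emb (e o) (e u) (feval lam b)).
  rewrite !hAnd.
  rewrite (cVal colfP t00 t01 hd (M := M) (lam := lam)) ?(cVal colfP t00 t01 hd (M := M) (lam := lam)); try lia; usimp => //; try (by move=> v hv; usimp; apply: Hl).
  split=> //; split=> //.
  rewrite (cLe colfP t00 t01 hd nnfP (al := feval lam a) (be := feval lam b)); try lia; usimp => //.
  by rewrite -hlep.
- by [].
- by rewrite /= (IHa e lam) ?(IHb e lam) //; try lia.
- split.
    move=> H x; have H1 := H (emb (e o) (e u) x).
    have H2 : gholds (upd e (B + n) (emb (e o) (e u) x)) (OnLf colf N o u (B + n)).
      rewrite (cOnL colfP); try lia; usimp => //; by exists x.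
    have H3 : gholds (upd e (B + n) (emb (e o) (e u) x)) (Trf B N o u a) := H1 H2.
    move: H3.
    rewrite (IH _ (upd lam n x)); try lia; usimp => //.
    move=> v hv; case: (eqVneq v n) => [->|/eqP hn]; first by rewrite !upd_same.
    rewrite !upd_ne; try lia; exact: Hl.
  move=> H x; change (gholds (upd e (B + n) x) (OnLf colf N o u (B + n)) -> gholds (upd e (B + n) x) (Trf B N o u a)).
  rewrite (cOnL colfP); try lia; usimp => //.
  case=> l El.
  rewrite (IH _ (upd lam n l)); try lia; usimp => //.
  move=> v hv; case: (eqVneq v n) => [->|/eqP hn]; first by rewrite !upd_same.
  rewrite !upd_ne; try lia; exact: Hl.
Qed.

End Tr.

End P4.
Import P4.

Module P5.
Set Implicit Arguments. Unset Strict Implicit. Unset Printing Implicit Defensive.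
Local Open Scope ring_scope.

Arguments GEx : simpl never.
Arguments GAnd : simpl never.
Arguments GOr : simpl never.
Arguments GNot : simpl never.
Arguments GIff : simpl never.

Lemma choice_nat (T : Type) (x0 : T) (P : nat -> T -> Prop) M :
  (forall v, (v < M)%N -> exists x, P v x) -> exists f : nat -> T, forall v, (v < M)%N -> P v (f v).
Proof.
move=> H.
have H' : forall v, exists x, (v < M)%N -> P v x.
  move=> v; case: (ltnP v M) => hv; first by have [x Hx] := H v hv; exists x.
  by exists x0.
exists (fun v => proj1_sig (constructive_indefinite_description _ (H' v))).
by move=> v hv; case: (constructive_indefinite_description _ (H' v)) => x /= /(_ hv).
Qed.

Lemma decomp_uniq d k i k' i' : (i < d)%N -> (i' < d)%N -> (k * d + i = k' * d + i')%N -> k = k' /\ i = i'.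
Proof.
move=> hi hi' E.
have d0 : (0 < d)%N by lia.
have h1 := divnMDl k i d0; have h2 := divnMDl k' i' d0.
rewrite (divn_small hi) in h1; rewrite (divn_small hi') in h2.
have kk : k = k' by rewrite -[k]addn0 -[k']addn0 -h1 -h2 E.
by split=> //; subst; lia.
Qed.

Lemma updB_lt (T : Type) (e : nat -> T) Z m g v : (v < Z)%N -> updB e Z m g v = e v.
Proof. by rewrite /updB => h; rewrite ifF //; lia. Qed.
Lemma updB_in (T : Type) (e : nat -> T) Z m g v : (Z <= v < Z + m)%N -> updB e Z m g v = g v.
Proof. by rewrite /updB => ->. Qed.

Section Coords.
Variables (F : fieldType) (d : nat) (G : geometry F d).
Local Notation pt := 'rV[F]_d.
Local Notation gf := (gform (@gar F d G)).
Local Notation Col := (@Col F d).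
Variable colf : nat -> nat -> nat -> nat -> gf.
Hypothesis colfP : forall N a b c e, (a < N)%N -> (b < N)%N -> (c < N)%N ->
  (gholds e (colf N a b c) <-> Col (e a) (e b) (e c)).
Variable t0 : F.
Hypothesis t00 : t0 != 0.
Hypothesis t01 : t0 != 1.
Hypothesis hd : (1 < d)%N.

Fixpoint Partf N O (c : nat -> nat) j s : gf := match j with
  | 0 => GE G s O
  | j.+1 => GEx N (GEx N.+1 (GAnd (Partf N.+2 O c j N)
       (GAnd (Scf colf N.+2 O O.+1 (c j) (O.+1 + j) N.+1) (Eqvf colf N.+2 O N.+1 N s))))
  end.

Lemma Partf_S N O c j s : Partf N O c j.+1 s = GEx N (GEx N.+1 (GAnd (Partf N.+2 O c j N)
       (GAnd (Scf colf N.+2 O O.+1 (c j) (O.+1 + j) N.+1) (Eqvf colf N.+2 O N.+1 N s)))).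
Proof. by []. Qed.

Lemma cPart O (o : pt) (E : nat -> pt) c lam j : forall N s e,
  (O.+1 + j < N)%N -> (forall i, (i < j)%N -> (c i < N)%N) -> (s < N)%N ->
  e O = o -> e O.+1 = E 0%N -> E 0%N <> o -> (forall i, (i < j)%N -> e (O.+1 + i)%N = E i) ->
  (forall i, (i < j)%N -> e (c i) = emb o (E 0%N) (lam i)) ->
  (gholds e (Partf N O c j s) <-> e s = o + \sum_(i < j) lam i *: (E i - o)).
Proof.
elim: j => [|j IH] N s e hN hc hs eO eu uo eE ec.
  by rewrite /= big_ord0 addr0 eO.
rewrite Partf_S hEx big_ord_recr.
rewrite -[X in _ <-> e s = X]/(o + (\sum_(i < j) lam i *: (E i - o) + lam j *: (E j - o))).
have key : forall p y, (gholds (upd (upd e N p) N.+1 y) (GAnd (Partf N.+2 O c j N)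
       (GAnd (Scf colf N.+2 O O.+1 (c j) (O.+1 + j) N.+1) (Eqvf colf N.+2 O N.+1 N s))) <->
    p = o + \sum_(i < j) lam i *: (E i - o) /\ (y = o + lam j *: (E j - o) /\ e s - p = y - o)).
  move=> p y; have hcj := hc j (ltnSn j); rewrite !hAnd.
  rewrite (IH N.+2 N); try lia; usimp => //; last first.
  - by move=> i hi; have hci := hc i (leqW hi); usimp; apply: ec; lia.
  - by move=> i hi; usimp; apply: eE; lia.
  - by move=> i hi; have := hc i (leqW hi); lia.
  rewrite (cMul colfP t00 t01 hd (al := lam j)); try lia; usimp => //; try by rewrite eO eu //; apply: ec.
  rewrite (cEqv colfP (pa := o) (pb := y) (pc := p) (pk := e s)); try lia; usimp => //.
  rewrite (EqvsemP t00 t01 hd) eO eE //.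
split.
  move=> H; destruct H as [p Hp]; apply hEx in Hp; destruct Hp as [y Hy]; apply key in Hy; destruct Hy as [Ep [Ey Es]].
  apply: (veq_lin (c := 1) Es); rewrite Ep Ey; vring.
move=> Es; exists (o + \sum_(i < j) lam i *: (E i - o)); apply/hEx.
exists (o + lam j *: (E j - o)); apply/key; split=> //; split=> //.
rewrite Es; vring.
Qed.


Variable ole : option (rel F).
Variable nnf : nat -> nat -> nat -> nat -> gf.
Variable lep : F -> Prop.
Hypothesis nnfP : forall N o u c e g, (o < N)%N -> (u < N)%N -> (c < N)%N -> e u <> e o ->
  e c = emb (e o) (e u) g -> (gholds e (nnf N o u c) <-> lep g).
Hypothesis hlep : forall a b, (match ole with Some le => le a b | None => False end) <-> lep (b - a).

Definition Sfr (o : pt) (E : nat -> pt) (y : pt) : pt := o + \sum_(i < d) y 0 i *: (E i - o).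

Definition RM (psi : fform) (m : nat) := maxn (fmax psi) (m * d).

Definition RelF N O (psi : fform) (m : nat) (args : 'I_m -> nat) : gf :=
  GExB N (RM psi m) (GAnd (GAndM (iota 0 (RM psi m)) (fun v => OnLf colf (N + RM psi m)%N O O.+1 (N + v)%N))
   (GAnd (GAndM (enum 'I_m) (fun k => Partf (N + RM psi m)%N O (fun j => N + (k * d + j))%N d (args k)))
         (Trf colf nnf N (N + RM psi m)%N O O.+1 psi))).

Definition lamOf m (y : 'I_m -> pt) (v : nat) : F :=
  if [pick kj : 'I_m * 'I_d | (v == kj.1 * d + kj.2)%N] is Some kj then y kj.1 0 kj.2 else 0.
Lemma lamOfE m (y : 'I_m -> pt) (k : 'I_m) (i : 'I_d) : lamOf y (k * d + i)%N = y k 0 i.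
Proof.
rewrite /lamOf; case: pickP => [[k' i'] /= /eqP E|H].
  have [/ord_inj hk /ord_inj hi] := decomp_uniq (ltn_ord i) (ltn_ord i') E.
  by subst.
by move: (H (k, i)); rewrite /= eqxx.
Qed.

Lemma kd_lt m k i : (k < m)%N -> (i < d)%N -> (k * d + i < m * d)%N.
Proof. move=> hk hi; nia. Qed.

Lemma Sfr_row o E (lam : nat -> F) k :
  Sfr o E (\row_(j < d) lam (k * d + j)%N) = o + \sum_(i < d) lam (k * d + i)%N *: (E i - o).
Proof. by rewrite /Sfr; congr (_ + _); apply: eq_bigr => i _; rewrite mxE. Qed.

Lemma cRel N O psi m (args : 'I_m -> nat) e (o : pt) (E : nat -> pt) (Q : ('I_m -> pt) -> Prop) :
  (O.+1 + d <= N)%N -> (forall k, (args k < N)%N) -> e O = o -> e O.+1 = E 0%N -> E 0%N <> o ->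
  (forall i, (i < d)%N -> e (O.+1 + i)%N = E i) ->
  (forall y y', Sfr o E y = Sfr o E y' -> y = y') ->
  (forall lam, Q (fun k => \row_(j < d) lam (k * d + j)%N) <-> fholds ole lam psi) ->
  forall y, (forall k, e (args k) = Sfr o E (y k)) ->
  (gholds e (@RelF N O psi m args) <-> Q y).
Proof.
move=> hN ha eO eu uo eE Sinj hQ y ey.
set M := RM psi m.
have hM1 : (fmax psi <= M)%N by rewrite /M /RM leq_maxl.
have hM2 : (m * d <= M)%N by rewrite /M /RM leq_maxr.
have envO : forall g, updB e N M g O = o by move=> g; rewrite updB_lt //; lia.
have envu : forall g, updB e N M g O.+1 = E 0%N by move=> g; rewrite updB_lt //; lia.
have envE : forall g i, (i < d)%N -> updB e N M g (O.+1 + i)%N = E i by move=> g i hi; rewrite updB_lt ?eE //; lia.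
have enva : forall g k, updB e N M g (args k) = e (args k) by move=> g k; rewrite updB_lt.
have envg : forall g v, (v < M)%N -> updB e N M g (N + v)%N = g (N + v)%N by move=> g v hv; rewrite updB_in //; lia.
have body : forall g lam, (forall v, (v < M)%N -> g (N + v)%N = emb o (E 0%N) (lam v)) ->
   (gholds (updB e N M g) (GAnd (GAndM (iota 0 M) (fun v => OnLf colf (N + M)%N O O.+1 (N + v)%N))
   (GAnd (GAndM (enum 'I_m) (fun k => Partf (N + M)%N O (fun j => N + (k * d + j))%N d (args k)))
         (Trf colf nnf N (N + M)%N O O.+1 psi))) <->
    (forall k, y k = \row_(j < d) lam (k * d + j)%N) /\ fholds ole lam psi).
  move=> g lam Hg.
  rewrite !hAnd hAndM hAndM.
  rewrite (cTr colfP t00 t01 hd nnfP hlep (M := M) (lam := lam)) //; try lia; last first.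
  - by move=> v hv; rewrite envg // envO envu; apply: Hg.
  - by rewrite envO envu.
  have Hpart : forall k : 'I_m, (gholds (updB e N M g) (Partf (N + M)%N O (fun j => N + (k * d + j))%N d (args k)) <->
       y k = \row_(j < d) lam (k * d + j)%N).
    move=> k.
    have hk := ltn_ord k.
    have hMd : (d <= M)%N by nia.
    have c1 : (O.+1 + d < N + M)%N by lia.
    have c2 : forall i, (i < d)%N -> (N + (k * d + i) < N + M)%N by move=> i hi; have := kd_lt hk hi; lia.
    have c3 : (args k < N + M)%N by have := ha k; lia.
    have c4 : forall i, (i < d)%N -> updB e N M g (N + (k * d + i))%N = emb o (E 0%N) (lam (k * d + i)%N).
      by move=> i hi; have hv := kd_lt hk hi; rewrite envg; [apply: Hg|]; lia.
    rewrite (cPart (lam := fun j => lam (k * d + j)%N) c1 c2 c3 (envO g) (envu g) uo (envE g) c4).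
    rewrite enva ey -Sfr_row; split; first exact: Sinj; by move=> ->.
  split.
    case=> _ [H1 H2]; split=> // k; apply/Hpart; apply: H1; exact: mem_enum.
  case=> H1 H2; split; last by split=> // k _; apply/Hpart.
  move=> v; rewrite mem_iota add0n => /andP [_ hv].
  rewrite (cOnL colfP); try lia; last by rewrite envO envu.
  rewrite (envg _ _ hv) envO envu.
  by exists (lam v); apply: Hg.
rewrite /RelF -/M hExB; split.
  case=> g Hg.
  have Hon : forall v, (v < M)%N -> exists l, g (N + v)%N = emb o (E 0%N) l.
    move=> v hv; move: Hg; rewrite hAnd hAndM => -[/(_ v) H _].
    move: H; rewrite mem_iota add0n hv => /(_ erefl).
    rewrite (cOnL colfP); try lia; last by rewrite envO envu.
    by rewrite envO envu envg.
  have [lam Hlam] := choice_nat 0 Hon.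
  have [H1 H2] := (body g lam Hlam).1 Hg.
  have -> : y = (fun k => \row_(j < d) lam (k * d + j)%N) by apply: functional_extensionality.
  by apply/hQ.
move=> HQ.
exists (fun w => emb o (E 0%N) (lamOf y (w - N))).
apply/(body _ (lamOf y)).
  by move=> v hv; rewrite addKn.
have Ey : forall k, y k = \row_(j < d) lamOf y (k * d + j)%N.
  by move=> k; apply/rowP => j; rewrite mxE lamOfE.
split=> //; apply/hQ.
have <- : y = (fun k => \row_(j < d) lamOf y (k * d + j)%N) by apply: functional_extensionality.
exact: HQ.
Qed.

End Coords.

End P5.
Import P5.

Module P6.
Set Implicit Arguments. Unset Strict Implicit. Unset Printing Implicit Defensive.
Local Open Scope ring_scope.

Arguments GEx : simpl never.
Arguments GAnd : simpl never.
Arguments GOr : simpl never.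
Arguments GNot : simpl never.
Arguments GIff : simpl never.

Lemma hForall (F : fieldType) (d : nat) (G : geometry F d) e n (a : gform (@gar F d G)) :
  gholds e (GForall n a) <-> forall x, gholds (upd e n x) a.
Proof. by []. Qed.

Section Main.
Variables (F : fieldType) (d : nat) (G : geometry F d).
Local Notation pt := 'rV[F]_d.
Local Notation gf := (gform (@gar F d G)).
Local Notation Col := (@Col F d).
Variable colf : nat -> nat -> nat -> nat -> gf.
Hypothesis colfP : forall N a b c e, (a < N)%N -> (b < N)%N -> (c < N)%N ->
  (gholds e (colf N a b c) <-> Col (e a) (e b) (e c)).
Variable t0 : F.
Hypothesis t00 : t0 != 0.
Hypothesis t01 : t0 != 1.
Hypothesis hd : (1 < d)%N.
Variable ole : option (rel F).
Variable nnf : nat -> nat -> nat -> nat -> gf.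
Variable lep : F -> Prop.
Hypothesis nnfP : forall N o u c e g, (o < N)%N -> (u < N)%N -> (c < N)%N -> e u <> e o ->
  e c = emb (e o) (e u) g -> (gholds e (nnf N o u c) <-> lep g).
Hypothesis hlep : forall a b, (match ole with Some le => le a b | None => False end) <-> lep (b - a).

Local Notation RelF := (RelF colf nnf).
Local Notation Partf := (Partf colf).

Definition FrameOK N O : gf :=
  GAnd (GNot (GE G O O.+1)) (GForall N (GExB N.+1 d (GAnd
     (GAndM (iota 0 d) (fun v => OnLf colf (N.+1 + d)%N O O.+1 (N.+1 + v)%N))
     (Partf (N.+1 + d)%N O (fun j => (N.+1 + j)%N) d N)))).

Lemma cFrame N O e (o : pt) (E : nat -> pt) : (O.+1 + d <= N)%N ->
  e O = o -> e O.+1 = E 0%N -> (forall i, (i < d)%N -> e (O.+1 + i)%N = E i) ->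
  (gholds e (FrameOK N O) <-> E 0%N <> o /\ forall x, exists y, x = Sfr o E y).
Proof.
move=> hN eO eu eE; rewrite hAnd hNot hE eO eu.
have neq : (o = E 0%N) <-> (E 0%N = o) by split=> ->.
rewrite neq hForall; split; case=> uo H; split=> //.
  move=> x; have {H} := H x; rewrite hExB => -[g].
  set e' := updB (upd e N x) N.+1 d g.
  have e'O : e' O = o by rewrite /e' updB_lt; [usimp | lia].
  have e'u : e' O.+1 = E 0%N by rewrite /e' updB_lt; [usimp | lia].
  have e'E : forall i, (i < d)%N -> e' (O.+1 + i)%N = E i by move=> i hi; rewrite /e' updB_lt; [usimp; apply: eE | lia].
  rewrite hAnd hAndM; case=> Hon Hp.
  have Hon' : forall v, (v < d)%N -> exists l, g (N.+1 + v)%N = emb o (E 0%N) l.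
    move=> v hv; have := Hon v; rewrite mem_iota add0n hv => /(_ erefl).
    rewrite (cOnL colfP); try lia; last by rewrite e'O e'u.
    by rewrite e'O e'u /e' updB_in //; lia.
  have [lam Hlam] := choice_nat 0 Hon'.
  move: Hp; rewrite (cPart colfP t00 t01 hd (o := o) (E := E) (lam := lam)); try lia; try done.
  - move=> Ex; exists (\row_(j < d) lam j); rewrite /Sfr.
    have -> : x = e' N by rewrite /e' updB_lt; [usimp | lia].
    by rewrite Ex; congr (_ + _); apply: eq_bigr => i _; rewrite mxE.
  - by move=> i hi; rewrite /e' updB_in; [apply: Hlam | lia].
move=> x; case: (H x) => y Ey; rewrite hExB.
exists (fun w => emb o (E 0%N) (y 0 (insubd (@Ordinal d 0 (ltnW hd)) (w - N.+1)%N))).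
set e' := updB (upd e N x) N.+1 d _.
have e'O : e' O = o by rewrite /e' updB_lt; [usimp | lia].
have e'u : e' O.+1 = E 0%N by rewrite /e' updB_lt; [usimp | lia].
have e'E : forall i, (i < d)%N -> e' (O.+1 + i)%N = E i by move=> i hi; rewrite /e' updB_lt; [usimp; apply: eE | lia].
have e'g : forall i : 'I_d, e' (N.+1 + i)%N = emb o (E 0%N) (y 0 i).
  move=> i; rewrite /e' updB_in; last by have := ltn_ord i; lia.
  by rewrite addKn valKd.
rewrite hAnd hAndM; split.
  move=> v; rewrite mem_iota add0n => /andP [_ hv].
  rewrite (cOnL colfP); try lia; last by rewrite e'O e'u.
  exists (y 0 (Ordinal hv)); rewrite e'O e'u; exact: (e'g (Ordinal hv)).
rewrite (cPart colfP t00 t01 hd (o := o) (E := E) (lam := fun j => y 0 (insubd (@Ordinal d 0 (ltnW hd)) j))); try lia; try done.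
- have -> : e' N = x by rewrite /e' updB_lt; [usimp | lia].
  by rewrite Ey /Sfr; congr (_ + _); apply: eq_bigr => i _; rewrite valKd.
- move=> i hi; have := e'g (Ordinal hi); rewrite /= => ->.
  by have -> : insubd (@Ordinal d 0 (ltnW hd)) i = Ordinal hi by apply: val_inj; rewrite /= insubdK.
Qed.


Variable psi : gI G -> fform.
Hypothesis hpsi : forall i lam, @Defs.grel F d G i (fun k : 'I_(gar i) => \row_(j < d) lam (k * d + j)%N) <-> fholds ole lam (psi i).

Definition AutCond N O : gf := GAndM (enum (gI G)) (fun i => GAllB N (gar i)
  (GIff (@GRel _ (@gar F d G) i (fun k : 'I_(gar i) => (N + k)%N))
        (RelF (N + gar i)%N O (psi i) (fun k : 'I_(gar i) => (N + k)%N)))).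

Lemma cAut N O e (o : pt) (E : nat -> pt) : (O.+1 + d <= N)%N ->
  e O = o -> e O.+1 = E 0%N -> E 0%N <> o -> (forall i, (i < d)%N -> e (O.+1 + i)%N = E i) ->
  (forall y y', Sfr o E y = Sfr o E y' -> y = y') -> (forall x, exists y, x = Sfr o E y) ->
  (gholds e (AutCond N O) <-> forall i (y : 'I_(gar i) -> pt), @Defs.grel F d G i (fun k => Sfr o E (y k)) <-> @Defs.grel F d G i y).
Proof.
move=> hN eO eu uo eE Sinj Ssurj; rewrite hAndM; split.
  move=> H i y; have := H i (mem_enum _ i); rewrite hAllB.
  move=> /(_ (fun w => if @insub _ _ ('I_(gar i)) (w - N)%N is Some k then Sfr o E (y k) else 0)).
  set e' := updB e N (gar i) _.
  have e'k : forall k : 'I_(gar i), e' (N + k)%N = Sfr o E (y k).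
    by move=> k; rewrite /e' updB_in; [rewrite addKn valK | have := ltn_ord k; lia].
  rewrite hIff (cRel colfP t00 t01 hd nnfP hlep (o := o) (E := E) (Q := @Defs.grel F d G i) _ _ _ _ uo _ Sinj _ e'k) //.
  - have EE : e' \o (fun k : 'I_(gar i) => (N + k)%N) = (fun k => Sfr o E (y k)).
      by apply: functional_extensionality => k /=; rewrite e'k.
    by move=> HH; rewrite -HH /= EE.
  - lia.
  - by move=> k; have := ltn_ord k; lia.
  - by rewrite /e' updB_lt //; lia.
  - by rewrite /e' updB_lt //; lia.
  - by move=> j hj; rewrite /e' updB_lt ?eE //; lia.
move=> H i _; rewrite hAllB => g.
set e' := updB e N (gar i) g.
pose y := fun k : 'I_(gar i) => proj1_sig (constructive_indefinite_description _ (Ssurj (e' (N + k)%N))).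
have e'k : forall k : 'I_(gar i), e' (N + k)%N = Sfr o E (y k).
  by move=> k; rewrite /y; case: (constructive_indefinite_description _ _).
rewrite hIff (cRel colfP t00 t01 hd nnfP hlep (o := o) (E := E) (Q := @Defs.grel F d G i) _ _ _ _ uo _ Sinj _ e'k) //.
- have EE : e' \o (fun k : 'I_(gar i) => (N + k)%N) = (fun k => Sfr o E (y k)).
    by apply: functional_extensionality => k /=; rewrite e'k.
  by rewrite /= EE; exact: H.
- lia.
- by move=> k; have := ltn_ord k; lia.
- by rewrite /e' updB_lt //; lia.
- by rewrite /e' updB_lt //; lia.
- by move=> j hj; rewrite /e' updB_lt ?eE //; lia.
Qed.


Variable G0 : geometry F d.
Variable psi0 : gI G0 -> fform.
Hypothesis hpsi0 : forall i lam, @Defs.grel F d G0 i (fun k : 'I_(gar i) => \row_(j < d) lam (k * d + j)%N) <-> fholds ole lam (psi0 i).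

Fixpoint TransG N O (phi : gform (@gar F d G0)) : gf := match phi with
  | GEq x y => GE G x y
  | @GRel _ _ i args => RelF N O (psi0 i) args
  | GFalse => GFalse
  | GImp a b => GImp (TransG N O a) (TransG N O b)
  | GForall n a => GForall n (TransG N O a)
  end.

Fixpoint gmax (phi : gform (@gar F d G0)) : nat := match phi with
  | GEq x y => maxn x.+1 y.+1
  | @GRel _ _ i args => \max_(k : 'I_(gar i)) (args k).+1
  | GFalse => 0%N
  | GImp a b => maxn (gmax a) (gmax b)
  | GForall n a => maxn n.+1 (gmax a)
  end.

Lemma cTransG N O (o : pt) (E : nat -> pt) phi : (O.+1 + d <= N)%N -> E 0%N <> o ->
  (forall y y', Sfr o E y = Sfr o E y' -> y = y') -> (forall x, exists y, x = Sfr o E y) ->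
  forall e h, (gmax phi <= O)%N ->
  e O = o -> e O.+1 = E 0%N -> (forall i, (i < d)%N -> e (O.+1 + i)%N = E i) ->
  (forall v, (v < O)%N -> e v = Sfr o E (h v)) ->
  (gholds e (TransG N O phi) <-> gholds h phi).
Proof.
move=> hN uo Sinj Ssurj.
elim: phi => [x y|i args||a IHa b IHb|n a IH] e h hg eO eu eE eh; simpl in hg.
- rewrite /= !eh; try lia; split; [exact: Sinj | by move=> ->].
- have ha : forall k, (args k < O)%N.
    by move=> k; exact: leq_trans (leq_bigmax k) hg.
  change (gholds e (RelF N O (psi0 i) args) <-> Defs.grel (h \o args)).
  rewrite (cRel colfP t00 t01 hd nnfP hlep (o := o) (E := E) (Q := @Defs.grel F d G0 i) _ _ eO eu uo eE Sinj (hpsi0 i) (y := h \o args)) //.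
  - by move=> k; have := ha k; lia.
  - by move=> k; rewrite /= eh.
- by [].
- by rewrite /= (IHa e h) ?(IHb e h) //; lia.
- rewrite hForall /=; split.
    move=> H y; rewrite -(IH (upd e n (Sfr o E y))); first exact: H.
    + lia.
    + by usimp.
    + by usimp.
    + by move=> j hj; usimp; apply: eE.
    + move=> v hv; case: (eqVneq v n) => [->|/eqP hn]; first by rewrite !upd_same.
      by rewrite !upd_ne //; apply: eh.
  move=> H x; have [y ->] := Ssurj x.
  rewrite (IH _ (upd h n y)); first exact: H.
  + lia.
  + by usimp.
  + by usimp.
  + by move=> j hj; usimp; apply: eE.
  + move=> v hv; case: (eqVneq v n) => [->|/eqP hn]; first by rewrite !upd_same.
    by rewrite !upd_ne //; apply: eh.
Qed.

End Main.

End P6.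
Import P6.

Module P7.
Set Implicit Arguments. Unset Strict Implicit. Unset Printing Implicit Defensive.
Local Open Scope ring_scope.

Arguments GEx : simpl never.
Arguments GAnd : simpl never.
Arguments GOr : simpl never.
Arguments GNot : simpl never.
Arguments GIff : simpl never.

Section Lin.
Variables (F : fieldType) (d : nat).
Local Notation pt := 'rV[F]_d.

Definition Amat (o : pt) (E : nat -> pt) : 'M[F]_d := \matrix_i (E i - o).

Lemma Sfr_mx (o : pt) (E : nat -> pt) (y : pt) : Sfr o E y = y *m Amat o E + o.
Proof.
rewrite /Sfr mulmx_sum_row addrC; congr (_ + _); apply: eq_bigr => i _.
by rewrite /Amat rowK.
Qed.

Lemma Sfr_unit (o : pt) (E : nat -> pt) : (forall x, exists y, x = Sfr o E y) -> Amat o E \in unitmx.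
Proof.
move=> Hs.
have H : forall i : 'I_d, exists y : pt, y *m Amat o E = 'e_i.
  move=> i; have [y Ey] := Hs (o + 'e_i); exists y.
  by apply: (addIr o); rewrite -Sfr_mx -Ey addrC.
pose B := \matrix_i (proj1_sig (constructive_indefinite_description _ (H i))).
have : B *m Amat o E = 1%:M.
  apply/row_matrixP => i; rewrite row_mul rowK row1.
  by case: (constructive_indefinite_description _ _).
by case/mulmx1_unit.
Qed.

Lemma Sfr_inj (o : pt) (E : nat -> pt) : (forall x, exists y, x = Sfr o E y) -> forall y y', Sfr o E y = Sfr o E y' -> y = y'.
Proof.
move=> Hs y y'; rewrite !Sfr_mx => /addIr E1.
have U := Sfr_unit Hs.
by rewrite -(mulmxK U y) E1 (mulmxK U).
Qed.

Definition delta (j : nat) : pt := \row_(i < d) ((i : nat) == j)%:R.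

Lemma Sfr_std (y : pt) : Sfr 0 delta y = y.
Proof.
rewrite /Sfr add0r; apply/rowP => j; rewrite summxE.
rewrite (bigD1 j) //= big1 ?addr0.
  by rewrite !mxE subr0 eqxx mulr1.
by move=> i /negbTE ij; rewrite !mxE subr0 (inj_eq val_inj) eq_sym ij mulr0.
Qed.

End Lin.

Section MainDef.
Variables (F : fieldType) (d : nat) (G : geometry F d).
Local Notation pt := 'rV[F]_d.
Local Notation gf := (gform (@gar F d G)).
Local Notation Col := (@Col F d).
Variable colf : nat -> nat -> nat -> nat -> gf.
Hypothesis colfP : forall N a b c e, (a < N)%N -> (b < N)%N -> (c < N)%N ->
  (gholds e (colf N a b c) <-> Col (e a) (e b) (e c)).
Variable t0 : F.
Hypothesis t00 : t0 != 0.
Hypothesis t01 : t0 != 1.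
Hypothesis hd : (1 < d)%N.
Variable ole : option (rel F).
Variable nnf : nat -> nat -> nat -> nat -> gf.
Variable lep : F -> Prop.
Hypothesis nnfP : forall N o u c e g, (o < N)%N -> (u < N)%N -> (c < N)%N -> e u <> e o ->
  e c = emb (e o) (e u) g -> (gholds e (nnf N o u c) <-> lep g).
Hypothesis hlep : forall a b, (match ole with Some le => le a b | None => False end) <-> lep (b - a).
Variable psi : gI G -> fform.
Hypothesis hpsi : forall i lam, @Defs.grel F d G i (fun k : 'I_(gar i) => \row_(j < d) lam (k * d + j)%N) <-> fholds ole lam (psi i).
Variable G0 : geometry F d.
Variable psi0 : gI G0 -> fform.
Hypothesis hpsi0 : forall i lam, @Defs.grel F d G0 i (fun k : 'I_(gar i) => \row_(j < d) lam (k * d + j)%N) <-> fholds ole lam (psi0 i).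
Hypothesis AS : AffAut_sup G0 G.

Lemma main_def n (R : ('I_n -> pt) -> Prop) : Gdefinable G0 R -> Gdefinable G R.
Proof.
case=> phi Hphi.
set K := maxn n (gmax phi).
set N := (K.+1 + d)%N.
have hK1 : (gmax phi <= K)%N by rewrite leq_maxr.
have hK2 : (n <= K)%N by rewrite leq_maxl.
have hN : (K.+1 + d <= N)%N by [].
exists (GExB K d.+1 (GAnd (FrameOK colf N K) (GAnd (AutCond colf nnf psi N K) (TransG colf nnf psi0 N K phi)))).
move=> e; rewrite hExB; split.
  move=> HR.
  exists (fun w => if w == K then 0 else @delta F d (w - K.+1)%N).
  set e' := updB e K d.+1 _.
  have e'O : e' K = 0 by rewrite /e' updB_in ?eqxx //; lia.
  have e'E : forall i, (i < d)%N -> e' (K.+1 + i)%N = @delta F d i.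
    by move=> i hi; rewrite /e' updB_in; [rewrite ifF ?addKn //; lia | lia].
  have e'u : e' K.+1 = @delta F d 0 by rewrite -(e'E 0%N) ?addn0 //; lia.
  have u0 : @delta F d 0 <> 0.
    move/rowP => /(_ (Ordinal (ltnW hd))); rewrite !mxE /= => /eqP; by rewrite oner_eq0.
  have Ssurj : forall x, exists y, x = Sfr 0 (@delta F d) y by move=> x; exists x; rewrite Sfr_std.
  have Sinj := Sfr_inj Ssurj.
  rewrite hAnd [X in _ /\ X]hAnd (cFrame colfP t00 t01 hd hN e'O e'u e'E).
  rewrite (cAut colfP t00 t01 hd nnfP hlep hpsi hN e'O e'u u0 e'E Sinj Ssurj).
  rewrite (cTransG colfP t00 t01 hd nnfP hlep hpsi0 hN u0 Sinj Ssurj (h := e')) //.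
  - split; first by split.
    split; first by move=> i y; have -> : (fun k => Sfr 0 (@delta F d) (y k)) = y by apply: functional_extensionality => k; rewrite Sfr_std.
    apply/Hphi.
    have -> : (fun k : 'I_n => e' k) = (fun k : 'I_n => e k).
      by apply: functional_extensionality => k; rewrite /e' updB_lt //; have := ltn_ord k; lia.
    exact: HR.
  - by move=> v hv; rewrite Sfr_std.
case=> g Hg.
set e' := updB e K d.+1 g in Hg.
set o := g K; set E := fun i => g (K.+1 + i)%N.
have e'O : e' K = o by rewrite /e' updB_in //; lia.
have e'E : forall i, (i < d)%N -> e' (K.+1 + i)%N = E i by move=> i hi; rewrite /e' updB_in //; lia.
have e'u : e' K.+1 = E 0%N by rewrite -e'E ?addn0 //; lia.
move: Hg; rewrite hAnd [X in _ /\ X]hAnd (cFrame colfP t00 t01 hd hN e'O e'u e'E) => -[[uo Ssurj] [HA HT]].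
have Sinj := Sfr_inj Ssurj.
move: HA; rewrite (cAut colfP t00 t01 hd nnfP hlep hpsi hN e'O e'u uo e'E Sinj Ssurj) => HA.
pose S := Sfr o E.
pose Sinv := fun x => proj1_sig (constructive_indefinite_description _ (Ssurj x)).
have SK : forall x, S (Sinv x) = x by move=> x; rewrite /Sinv; case: (constructive_indefinite_description _ _).
have SinvK : forall y, Sinv (S y) = y by move=> y; apply: Sinj; rewrite -/S SK.
have AutS : Aut G S.
  split; first by exists Sinv.
  by move=> i args; rewrite (HA i args).
have AffS : AffAut G S.
  split=> //; exists (Amat o E), o; split; first exact: Sfr_unit.
  by move=> x; rewrite /S Sfr_mx.
have [Aut0 _] := AS AffS.
move: HT; rewrite (cTransG colfP t00 t01 hd nnfP hlep hpsi0 hN uo Sinj Ssurj (h := Sinv \o e')) //; last first.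
  by move=> v hv /=; rewrite -/S SK.
rewrite (aut_gholds Aut0) -Hphi.
have -> : (fun k : 'I_n => (S \o (Sinv \o e')) k) = (fun k : 'I_n => e k).
  apply: functional_extensionality => k /=; rewrite SK /e' updB_lt //; have := ltn_ord k; lia.
done.
Qed.

End MainDef.

End P7.
Import P7.

Module P8.
Set Implicit Arguments. Unset Strict Implicit. Unset Printing Implicit Defensive.
Local Open Scope ring_scope.

Section Generic.
Variables (F : fieldType) (d : nat).
Local Notation pt := 'rV[F]_d.

Lemma Co_Aut (G G' : geometry F d) : Co_sub G G' -> Aut_sup G G'.
Proof.
move=> HC f Hf; split; first exact: Hf.1.
move=> i args.
case: (posnP (gar i)) => [ar0|arp].
  have -> : f \o args = args.
    apply: functional_extensionality => -[m hm]; exfalso; move: hm; rewrite ar0.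
    by [].
  done.
have Hdef : Gdefinable G (@Defs.grel F d G i).
  by exists (@GRel _ (@gar F d G) i (fun k => nat_of_ord k)).
have [phi2 Hphi2] := HC _ arp _ Hdef.
pose ea := fun v : nat => if @insub _ _ ('I_(gar i)) v is Some k then args k else 0.
have Ea : (fun k : 'I_(gar i) => ea k) = args by apply: functional_extensionality => k; rewrite /ea valK.
have Efa : (fun k : 'I_(gar i) => (f \o ea) k) = f \o args by apply: functional_extensionality => k; rewrite /= /ea valK.
by rewrite -{1}Ea Hphi2 (aut_gholds Hf) -Hphi2 Efa.
Qed.

Lemma Aut_Aff (G G' : geometry F d) : Aut_sup G G' -> AffAut_sup G G'.
Proof. by move=> H f [Hf Af]; split=> //; apply: H. Qed.

Variable G : geometry F d.

Lemma builder3 (P : pt -> pt -> pt -> Prop) : Gdefinable G (rel3 P) ->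
  exists bf : nat -> nat -> nat -> nat -> gform (@gar F d G),
    forall N a b c e, (a < N)%N -> (b < N)%N -> (c < N)%N -> (gholds e (bf N a b c) <-> P (e a) (e b) (e c)).
Proof.
case=> f Hf.
exists (fun N a b c => GEx N (GEx N.+1 (GEx N.+2 (GAnd (GE G N a) (GAnd (GE G N.+1 b) (GAnd (GE G N.+2 c)
          (rn (fun v => N + v)%N f))))))).
move=> N a b c e ha hb hc.
have si : injective (fun v => N + v)%N by move=> x y /= /eqP; rewrite eqn_add2l => /eqP.
rewrite hEx; split.
  case=> x; rewrite hEx => -[y]; rewrite hEx => -[z]; rewrite !hAnd !hE hrn //; usimp.
  move=> [<- [<- [<- H]]].
  have := (Hf (upd (upd (upd e N x) N.+1 y) N.+2 z \o (fun v => N + v)%N)).2 H.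
  rewrite /rel3 /=; usimp.
  by rewrite !addn0 addn1 addn2; usimp.
move=> H; exists (e a); rewrite hEx; exists (e b); rewrite hEx; exists (e c).
rewrite !hAnd !hE hrn //; usimp; split=> //; split=> //; split=> //.
apply/Hf; rewrite /rel3 /= !addn0 addn1 addn2; usimp; exact: H.
Qed.

Lemma psi_of (ole : option (rel F)) : (forall i : gI G, Fdefinable_pts ole (@Defs.grel F d G i)) ->
  exists psi : gI G -> fform, forall i lam,
    @Defs.grel F d G i (fun k : 'I_(gar i) => \row_(j < d) lam (k * d + j)%N) <-> fholds ole lam (psi i).
Proof.
move=> H.
have H' : forall i, exists f, forall lam, @Defs.grel F d G i (fun k : 'I_(gar i) => \row_(j < d) lam (k * d + j)%N) <-> fholds ole lam f.
  by move=> i; have [f [_ Hf]] := H i; exists f.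
exists (fun i => proj1_sig (constructive_indefinite_description _ (H' i))).
by move=> i; case: (constructive_indefinite_description _ _).
Qed.

End Generic.

End P8.
Import P8.

Module P9.
Set Implicit Arguments. Unset Strict Implicit. Unset Printing Implicit Defensive.
Local Open Scope ring_scope.

Lemma assemble (F : fieldType) (d : nat) (G G' : geometry F d) :
  (AffAut_sup G G' -> Co_sub G G') ->
  (Co_sub G G' <-> Aut_sup G G') /\ (Co_sub G G' <-> AffAut_sup G G').
Proof.
move=> H; split; split.
- exact: Co_Aut.
- by move=> HA; apply: H; apply: Aut_Aff.
- by move=> HC; apply: Aut_Aff; apply: Co_Aut.
- exact: H.
Qed.

Lemma ordered_case (F : realFieldType) (d : nat) (G G' : geometry F d) :
  (2 <= d)%N ->
  FFD (Some (fun x y : F => x <= y)) G -> FFD (Some (fun x y : F => x <= y)) G' ->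
  AffAut_sup G G' -> Co_sub G G'.
Proof.
move=> hd [_ HG] [HC HG'] AS n _ R HR.
have [bwf bwfP] := builder3 HC.
pose colf := fun N a b c => GOr (GE G' c a) (GOr (bwf N a b c) (GOr (bwf N a c b) (bwf N b a c))).
have colfP : forall N a b c e, (a < N)%N -> (b < N)%N -> (c < N)%N ->
    (gholds e (colf N a b c) <-> Col (e a) (e b) (e c)).
  move=> N a b c e ha hb hc; rewrite ColBw /colf !hOr hE !bwfP //; try reflexivity.
pose nnf := fun N o u c => GOr (bwf N o c u) (bwf N o u c).
have nnfP : forall N o u c e (g : F), (o < N)%N -> (u < N)%N -> (c < N)%N -> e u <> e o ->
    e c = emb (e o) (e u) g -> (gholds e (nnf N o u c) <-> 0 <= g).
  move=> N o u c e g ho hu hc uo Ec; rewrite /nnf hOr !bwfP //.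
  exact: NonNegP.
have hlep : forall a b : F, (match Some (fun x y : F => x <= y) with Some le => le a b | None => False end) <-> 0 <= b - a.
  by move=> a b /=; rewrite subr_ge0.
have [psi hpsi] := psi_of HG'.
have [psi0 hpsi0] := psi_of HG.
have t00 : (2 : F) != 0 by rewrite pnatr_eq0.
have t01 : (2 : F) != 1.
  apply/negP => /eqP h; have h2 : (1 : F) < 2 by lra.
  by rewrite h ltxx in h2.
exact: (main_def (ole := Some (fun x y : F => x <= y)) (lep := fun g : F => 0 <= g) colfP t00 t01 hd nnfP hlep hpsi hpsi0 AS HR).
Qed.

Lemma field_case (F : fieldType) (d : nat) (G G' : geometry F d) :
  (2 <= d)%N -> (exists a b c : F, a <> b /\ a <> c /\ b <> c) ->
  FFD None G -> FFD None G' ->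
  AffAut_sup G G' -> Co_sub G G'.
Proof.
move=> hd [a [b [c [ab [ac bc]]]]] [_ HG] [HC HG'] AS n _ R HR.
have [colf colfP] := builder3 HC.
pose nnf := fun (N o u c : nat) => @GFalse _ (@gar F d G').
have nnfP : forall N o u c e (g : F), (o < N)%N -> (u < N)%N -> (c < N)%N -> e u <> e o ->
    e c = emb (e o) (e u) g -> (gholds e (nnf N o u c) <-> (fun _ : F => False) g).
  by [].
have hlep : forall a b : F, (match (None : option (rel F)) with Some le => le a b | None => False end) <-> (fun _ : F => False) (b - a).
  by [].
have [psi hpsi] := psi_of HG'.
have [psi0 hpsi0] := psi_of HG.
have ba : b - a != 0 by rewrite subr_eq0; apply/eqP => h; apply: ab.
have t00 : (c - a) / (b - a) != 0.
  by rewrite mulf_eq0 invr_eq0 (negbTE ba) orbF subr_eq0; apply/eqP => h; apply: ac.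
have t01 : (c - a) / (b - a) != 1.
  apply/eqP => h; apply: bc.
  have : c - a = b - a by rewrite -[c - a](mulfVK ba) h mul1r.
  by move/addIr.
exact: (main_def (ole := None) (lep := fun _ : F => False) colfP t00 t01 hd nnfP hlep hpsi hpsi0 AS HR).
Qed.


End P9.
Import P9.

Local Open Scope ring_scope.

Theorem theorem2 :
  (forall (F : realFieldType) (d : nat) (G G' : geometry F d),
     (2 <= d)%N ->
     FFD (Some (fun x y : F => x <= y)) G ->
     FFD (Some (fun x y : F => x <= y)) G' ->
     (Co_sub G G' <-> Aut_sup G G') /\ (Co_sub G G' <-> AffAut_sup G G'))
  /\
  (forall (F : fieldType) (d : nat) (G G' : geometry F d),
     (2 <= d)%N ->
     (exists a b c : F, a <> b /\ a <> c /\ b <> c) ->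
     FFD None G ->
     FFD None G' ->
     (Co_sub G G' <-> Aut_sup G G') /\ (Co_sub G G' <-> AffAut_sup G G')).
Proof.
split.
  move=> F d G G' hd H1 H2; apply: assemble; exact: ordered_case.
move=> F d G G' hd h3 H1 H2; apply: assemble; exact: field_case.
Qed.
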